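(* Let $1\le i,j,k,l\le n$ with $i<j$, $k<l$, $i\le k$. Then in ${\boldsymbol U}_{v}(\mathfrak q_n)$: \[ \mathsf E_{j,i}\mathsf E_{k,l}=\begin{cases}\mathsf E_{k,l}\mathsf E_{j,i} & (i<j\le k<l\text{ or } i<k<l<j),\\ \mathsf E_{k,l}\mathsf E_{j,i}-\mathsf E_{j,l}\mathsf K_j\mathsf K_i^{-1} & (i=k<j<l),\\ \mathsf E_{k,l}\mathsf E_{j,i}+\mathsf E_{k,i}\mathsf K_j\mathsf K_k^{-1} & (i<k<j=l),\\ \mathsf E_{k,l}\mathsf E_{j,i}-(v-v^{-1})\mathsf E_{k,i}\mathsf E_{j,l}\mathsf K_j\mathsf K_k^{-1} & (i<k<j<l),\\ \mathsf E_{k,l}\mathsf E_{j,i}+\dfrac{\mathsf K_j\mathsf K_i^{-1}-\mathsf K_i\mathsf K_j^{-1}}{v-v^{-1}} & (i=k\text{ and } j=l).\end{cases} \]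
   Context: Let $v$ be an indeterminate. The quantum queer superalgebra ${\boldsymbol U}_{v}(\mathfrak q_n)$ is the associative superalgebra over $\mathbb Q(v)$ generated by even generators $\mathsf K_i,\mathsf K_i^{-1}$ ($1\le i\le n$), $\mathsf E_j,\mathsf F_j$ ($1\le j\le n-1$) and odd generators $\mathsf K_{\bar i}$ ($1\le i\le n$), $\mathsf E_{\bar j},\mathsf F_{\bar j}$ ($1\le j\le n-1$), subject to the following relations (indices are taken only where they make sense), where $(\epsilon_i,\alpha_j)=\delta_{i,j}-\delta_{i,j+1}$: (QQ1) $\mathsf K_i\mathsf K_i^{-1}=\mathsf K_i^{-1}\mathsf K_i=1$, $\mathsf K_i\mathsf K_j=\mathsf K_j\mathsf K_i$, $\mathsf K_i\mathsf K_{\bar j}=\mathsf K_{\bar j}\mathsf K_i$, $\mathsf K_{\bar i}\mathsf K_{\bar j}+\mathsf K_{\bar j}\mathsf K_{\bar i}=2\delta_{i,j}\frac{\mathsf K_i^2-\mathsf K_i^{-2}}{v^2-v^{-2}}$. (QQ2) $\mathsf K_i\mathsf E_j=v^{(\epsilon_i,\alpha_j)}\mathsf E_j\mathsf K_i$, $\mathsf K_i\mathsf E_{\bar j}=v^{(\epsilon_i,\alpha_j)}\mathsf E_{\bar j}\mathsf K_i$, $\mathsf K_i\mathsf F_j=v^{-(\epsilon_i,\alpha_j)}\mathsf F_j\mathsf K_i$, $\mathsf K_i\mathsf F_{\bar j}=v^{-(\epsilon_i,\alpha_j)}\mathsf F_{\bar j}\mathsf K_i$. (QQ3) $\mathsf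 K_{\bar i}\mathsf E_i-v\mathsf E_i\mathsf K_{\bar i}=\mathsf E_{\bar i}\mathsf K_i^{-1}$, $v\mathsf K_{\bar i}\mathsf E_{i-1}-\mathsf E_{i-1}\mathsf K_{\bar i}=-\mathsf K_i^{-1}\mathsf E_{\overline{i-1}}$, $\mathsf K_{\bar i}\mathsf F_i-v\mathsf F_i\mathsf K_{\bar i}=-\mathsf F_{\bar i}\mathsf K_i$, $v\mathsf K_{\bar i}\mathsf F_{i-1}-\mathsf F_{i-1}\mathsf K_{\bar i}=\mathsf K_i\mathsf F_{\overline{i-1}}$, $\mathsf K_{\bar i}\mathsf E_{\bar i}+v\mathsf E_{\bar i}\mathsf K_{\bar i}=\mathsf E_i\mathsf K_i^{-1}$, $v\mathsf K_{\bar i}\mathsf E_{\overline{i-1}}+\mathsf E_{\overline{i-1}}\mathsf K_{\bar i}=\mathsf K_i^{-1}\mathsf E_{i-1}$, $\mathsf K_{\bar i}\mathsf F_{\bar i}+v\mathsf F_{\bar i}\mathsf K_{\bar i}=\mathsf F_i\mathsf K_i$, $v\mathsf K_{\bar i}\mathsf F_{\overline{i-1}}+\mathsf F_{\overline{i-1}}\mathsf K_{\bar i}=\mathsf K_i\mathsf F_{i-1}$, and for $j\ne i,i-1$: $\mathsf K_{\bar i}\mathsf E_j=\mathsf E_j\mathsf K_{\bar i}$, $\mathsf K_{\bar i}\mathsf F_j=\mathsf F_j\mathsf K_{\bar i}$, $\mathsf K_{\bar i}\mathsf E_{\bar j}=-\mathsf E_{\bar j}\mathsf K_{\bar i}$,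 $\mathsf K_{\bar i}\mathsf F_{\bar j}=-\mathsf F_{\bar j}\mathsf K_{\bar i}$. (QQ4) $\mathsf E_i\mathsf F_j-\mathsf F_j\mathsf E_i=\delta_{i,j}\frac{\mathsf K_i\mathsf K_{i+1}^{-1}-\mathsf K_i^{-1}\mathsf K_{i+1}}{v-v^{-1}}$, $\mathsf E_{\bar i}\mathsf F_{\bar j}+\mathsf F_{\bar j}\mathsf E_{\bar i}=\delta_{i,j}\big(\frac{\mathsf K_i\mathsf K_{i+1}-\mathsf K_i^{-1}\mathsf K_{i+1}^{-1}}{v-v^{-1}}+(v-v^{-1})\mathsf K_{\bar i}\mathsf K_{\overline{i+1}}\big)$, $\mathsf E_i\mathsf F_{\bar j}-\mathsf F_{\bar j}\mathsf E_i=\delta_{i,j}(\mathsf K_{i+1}^{-1}\mathsf K_{\bar i}-\mathsf K_{\overline{i+1}}\mathsf K_i^{-1})$, $\mathsf E_{\bar i}\mathsf F_j-\mathsf F_j\mathsf E_{\bar i}=\delta_{i,j}(\mathsf K_{i+1}\mathsf K_{\bar i}-\mathsf K_{\overline{i+1}}\mathsf K_i)$. (QQ5) $\mathsf E_{\bar i}^2=-\frac{v-v^{-1}}{v+v^{-1}}\mathsf E_i^2$, $\mathsf F_{\bar i}^2=\frac{v-v^{-1}}{v+v^{-1}}\mathsf F_i^2$; for $|i-j|\ne1$: $\mathsf E_i\mathsf E_{\bar j}=\mathsf E_{\bar j}\mathsf E_i$, $\mathsf F_i\mathsf F_{\bar j}=\mathsf F_{\bar j}\mathsf F_i$; for $|i-j|>1$: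 $\mathsf E_i\mathsf E_j=\mathsf E_j\mathsf E_i$, $\mathsf F_i\mathsf F_j=\mathsf F_j\mathsf F_i$, $\mathsf E_{\bar i}\mathsf E_{\bar j}=-\mathsf E_{\bar j}\mathsf E_{\bar i}$, $\mathsf F_{\bar i}\mathsf F_{\bar j}=-\mathsf F_{\bar j}\mathsf F_{\bar i}$; $\mathsf E_i\mathsf E_{i+1}-v\mathsf E_{i+1}\mathsf E_i=\mathsf E_{\bar i}\mathsf E_{\overline{i+1}}+v\mathsf E_{\overline{i+1}}\mathsf E_{\bar i}$, $\mathsf E_i\mathsf E_{\overline{i+1}}-v\mathsf E_{\overline{i+1}}\mathsf E_i=\mathsf E_{\bar i}\mathsf E_{i+1}-v\mathsf E_{i+1}\mathsf E_{\bar i}$, $\mathsf F_i\mathsf F_{i+1}-v\mathsf F_{i+1}\mathsf F_i=-(\mathsf F_{\bar i}\mathsf F_{\overline{i+1}}+v\mathsf F_{\overline{i+1}}\mathsf F_{\bar i})$, $\mathsf F_i\mathsf F_{\overline{i+1}}-v\mathsf F_{\overline{i+1}}\mathsf F_i=\mathsf F_{\bar i}\mathsf F_{i+1}-v\mathsf F_{i+1}\mathsf F_{\bar i}$. (QQ6) for $|i-j|=1$: $\mathsf E_i^2X-(v+v^{-1})\mathsf E_iX\mathsf E_i+X\mathsf E_i^2=0$ for $X\in\{\mathsf E_j,\mathsf E_{\bar j}\}$ and $\mathsf F_i^2Y-(v+v^{-1})\mathsf F_iY\mathsf F_i+Y\mathsf F_i^2=0$ for $Y\in\{\mathsf F_j,\mathsf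 F_{\bar j}\}$. Quantum root vectors: for $1\le i\le n-1$ put $\mathsf E_{i,i+1}=\mathsf E_i$, $\overline{\mathsf E}_{i,i+1}=\mathsf E_{\bar i}$, $\mathsf E_{i+1,i}=\mathsf F_i$, $\overline{\mathsf E}_{i+1,i}=\mathsf F_{\bar i}$, and recursively for $i+1<j\le n$: $\mathsf E_{i,j}=-\mathsf E_{i,j-1}\mathsf E_{j-1}+v^{-1}\mathsf E_{j-1}\mathsf E_{i,j-1}$, $\overline{\mathsf E}_{i,j}=-\mathsf E_{i,j-1}\mathsf E_{\overline{j-1}}+v^{-1}\mathsf E_{\overline{j-1}}\mathsf E_{i,j-1}$, $\mathsf E_{j,i}=-\mathsf F_{j-1}\mathsf E_{j-1,i}+v\mathsf E_{j-1,i}\mathsf F_{j-1}$, $\overline{\mathsf E}_{j,i}=-\mathsf F_{\overline{j-1}}\mathsf E_{j-1,i}+v\mathsf E_{j-1,i}\mathsf F_{\overline{j-1}}$. *)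

(* Defs.v *)
From HB Require Import structures.
From mathcomp Require Import all_boot all_order all_algebra.
Set Implicit Arguments. Unset Strict Implicit. Unset Printing Implicit Defensive.
Import Order.TTheory GRing.Theory Num.Theory.
Local Open Scope ring_scope.

Definition QV : fieldType := {fraction {poly rat}}.
Definition vq : QV := tofrac ('X : {poly rat}).

(* v^{(eps_i, alpha_j)} with (eps_i,alpha_j) = delta_{i,j} - delta_{i,j+1} *)
Definition vpow (i j : nat) : QV :=
  if i == j then vq else if i == j.+1 then vq^-1 else 1.
Definition vpowN (i j : nat) : QV :=
  if i == j then vq^-1 else if i == j.+1 then vq else 1.

Section Uq.
Variable A : algType QV.
Variable n : nat.
(* Generators, indexed 1-based by nat:
   K i = K_i, Ki i = K_i^{-1}, Kb i = K_{bar i}, E j = E_j, Eb j = E_{bar j},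
   F j = F_j, Fb j = F_{bar j}. *)
Variables K Ki Kb E Eb F Fb : nat -> A.

Local Notation inN i := (1 <= i <= n)%N.
Local Notation inN1 j := (1 <= j <= n.-1)%N.
Local Notation v := vq.

Definition QQ1 : Prop :=
  forall i j, inN i -> inN j ->
  [/\ K i * Ki i = 1, Ki i * K i = 1, K i * K j = K j * K i,
      K i * Kb j = Kb j * K i &
      Kb i * Kb j + Kb j * Kb i =
        (if i == j then 2%:R * (v ^+ 2 - v ^- 2)^-1 else 0) *: (K i ^+ 2 - Ki i ^+ 2)].

Definition QQ2 : Prop :=
  forall i j, inN i -> inN1 j ->
  [/\ K i * E j = vpow i j *: (E j * K i),
      K i * Eb j = vpow i j *: (Eb j * K i),
      K i * F j = vpowN i j *: (F j * K i) &
      K i * Fb j = vpowN i j *: (Fb j * K i)].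

Definition QQ3 : Prop :=
  (forall i, inN i -> inN1 i ->
    [/\ Kb i * E i - v *: (E i * Kb i) = Eb i * Ki i,
        Kb i * F i - v *: (F i * Kb i) = - (Fb i * K i),
        Kb i * Eb i + v *: (Eb i * Kb i) = E i * Ki i &
        Kb i * Fb i + v *: (Fb i * Kb i) = F i * K i]) /\
  (forall i, inN i -> inN1 i.-1 ->
    [/\ v *: (Kb i * E i.-1) - E i.-1 * Kb i = - (Ki i * Eb i.-1),
        v *: (Kb i * F i.-1) - F i.-1 * Kb i = K i * Fb i.-1,
        v *: (Kb i * Eb i.-1) + Eb i.-1 * Kb i = Ki i * E i.-1 &
        v *: (Kb i * Fb i.-1) + Fb i.-1 * Kb i = K i * F i.-1]) /\
  (forall i j, inN i -> inN1 j -> j != i -> j != i.-1 ->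
    [/\ Kb i * E j = E j * Kb i,
        Kb i * F j = F j * Kb i,
        Kb i * Eb j = - (Eb j * Kb i) &
        Kb i * Fb j = - (Fb j * Kb i)]).

Definition QQ4 : Prop :=
  forall i j, inN1 i -> inN1 j ->
  [/\ E i * F j - F j * E i =
        (if i == j then (v - v^-1)^-1 *: (K i * Ki i.+1 - Ki i * K i.+1) else 0),
      Eb i * Fb j + Fb j * Eb i =
        (if i == j then (v - v^-1)^-1 *: (K i * K i.+1 - Ki i * Ki i.+1)
                        + (v - v^-1) *: (Kb i * Kb i.+1) else 0),
      E i * Fb j - Fb j * E i =
        (if i == j then Ki i.+1 * Kb i - Kb i.+1 * Ki i else 0) &
      Eb i * F j - F j * Eb i =
        (if i == j then K i.+1 * Kb i - Kb i.+1 * K i else 0)].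

Definition QQ5 : Prop :=
  (forall i, inN1 i ->
    Eb i ^+ 2 = - (((v - v^-1) / (v + v^-1)) *: E i ^+ 2) /\
    Fb i ^+ 2 = ((v - v^-1) / (v + v^-1)) *: F i ^+ 2) /\
  (forall i j, inN1 i -> inN1 j -> i != j.+1 -> j != i.+1 ->
    E i * Eb j = Eb j * E i /\ F i * Fb j = Fb j * F i) /\
  (forall i j, inN1 i -> inN1 j -> (i.+1 < j)%N || (j.+1 < i)%N ->
    [/\ E i * E j = E j * E i, F i * F j = F j * F i,
        Eb i * Eb j = - (Eb j * Eb i) & Fb i * Fb j = - (Fb j * Fb i)]) /\
  (forall i, inN1 i -> inN1 i.+1 ->
    [/\ E i * E i.+1 - v *: (E i.+1 * E i) = Eb i * Eb i.+1 + v *: (Eb i.+1 * Eb i),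
        E i * Eb i.+1 - v *: (Eb i.+1 * E i) = Eb i * E i.+1 - v *: (E i.+1 * Eb i),
        F i * F i.+1 - v *: (F i.+1 * F i) = - (Fb i * Fb i.+1 + v *: (Fb i.+1 * Fb i)) &
        F i * Fb i.+1 - v *: (Fb i.+1 * F i) = Fb i * F i.+1 - v *: (F i.+1 * Fb i)]).

Definition serre (a x : A) : A :=
  a ^+ 2 * x - (v + v^-1) *: (a * x * a) + x * a ^+ 2.

Definition QQ6 : Prop :=
  forall i j, inN1 i -> inN1 j -> (i == j.+1) || (j == i.+1) ->
  [/\ serre (E i) (E j) = 0, serre (E i) (Eb j) = 0,
      serre (F i) (F j) = 0 & serre (F i) (Fb j) = 0].

Definition Uq_relations : Prop := [/\ QQ1, QQ2, QQ3, QQ4 & QQ5 /\ QQ6].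

(* Quantum root vectors.
   Eup i d = E_{i, i+d+1};  Edown i d = E_{i+d+1, i}. *)
Fixpoint Eup (i d : nat) : A :=
  match d with
  | 0 => E i
  | d'.+1 => - (Eup i d' * E (i + d').+1) + v^-1 *: (E (i + d').+1 * Eup i d')
  end.
Fixpoint Edown (i d : nat) : A :=
  match d with
  | 0 => F i
  | d'.+1 => - (F (i + d').+1 * Edown i d') + v *: (Edown i d' * F (i + d').+1)
  end.

(* Eroot a b = E_{a,b} for a <> b (set to 0 on the unused diagonal). *)
Definition Eroot (a b : nat) : A :=
  if (a < b)%N then Eup a (b - a).-1
  else if (b < a)%N then Edown b (a - b).-1 else 0.

End Uq.

(* Main.v *)
Require Import Defs.
From HB Require Import structures.
From mathcomp Require Import all_boot all_order all_algebra.
From mathcomp Require Import ring zify.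
Import Order.TTheory GRing.Theory Num.Theory.
Local Open Scope ring_scope.

Lemma v_neq0 : vq != 0.
Proof. by rewrite /vq tofrac_eq0 polyX_eq0. Qed.

Lemma vvN_neq0 : vq - vq^-1 != 0.
Proof.
apply/eqP => h.
have : vq * vq = 1.
  by move/eqP: h; rewrite subr_eq0 => /eqP h; rewrite {1}h mulVf // v_neq0.
rewrite /vq -tofracM -tofrac1 => /eqP; rewrite tofrac_eq => /eqP.
move/(congr1 (fun p => p.[0])); rewrite hornerM hornerX mul0r hornerC => /eqP.
by rewrite eq_sym oner_eq0.
Qed.

Lemma vv1_neq0 : vq * vq - 1 != 0.
Proof.
apply: contra vvN_neq0 => /eqP e; apply/eqP.
have -> : vq - vq^-1 = (vq * vq - 1) * vq^-1 by rewrite mulrBl mul1r mulfK ?v_neq0.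
by rewrite e mul0r.
Qed.

Lemma allF (P : fieldType -> Prop) : (forall R, P R) -> P QV.
Proof. by apply. Qed.
Ltac scal := lazymatch goal with |- ?a = ?b => change (@eq (GRing.Field.sort QV) a b) end;
  move: v_neq0 vvN_neq0 vv1_neq0; generalize vq; pattern QV; apply: allF;
  let R := fresh "R" in let w := fresh "w" in let h1 := fresh "h1" in
  let h2 := fresh "h2" in let h3 := fresh "h3" in
  move=> R w h1 h2 h3; field; rewrite ?h1 ?h2 ?h3.

(* A small reflective normaliser for linear combinations *)
Inductive tm := Lf of nat | Zr | Ad of tm & tm | Ng of tm | Sc of QV & tm.

Section LinComb.
Variable V : lmodType QV.
Fixpoint ev (ms : seq V) (t : tm) : V :=
  match t with
  | Lf k => nth 0 ms k
  | Zr => 0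
  | Ad t u => ev ms t + ev ms u
  | Ng t => - ev ms t
  | Sc s t => s *: ev ms t
  end.
Fixpoint cf (k : nat) (t : tm) : QV :=
  match t with
  | Lf j => if j == k then 1 else 0
  | Zr => 0
  | Ad t u => cf k t + cf k u
  | Ng t => - cf k t
  | Sc s t => s * cf k t
  end.
Lemma ev_cf ms t : ev ms t = \sum_(k < size ms) cf k t *: nth 0 ms k.
Proof.
elim: t => [j||t IHt u IHu|t IHt|s t IHt] /=.
- case: (ltnP j (size ms)) => hj.
    rewrite (bigD1 (Ordinal hj)) //= eqxx scale1r big1 ?addr0 // => i.
    by rewrite -val_eqE /= eq_sym => /negbTE ->; rewrite scale0r.
  rewrite nth_default // big1 // => i _.
  by rewrite (gtn_eqF (leq_trans (ltn_ord i) hj)) scale0r.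
- by rewrite big1 // => i _; rewrite scale0r.
- by rewrite IHt IHu -big_split /=; apply: eq_bigr => i _; rewrite scalerDl.
- by rewrite IHt -sumrN; apply: eq_bigr => i _; rewrite scaleNr.
- by rewrite IHt scaler_sumr; apply: eq_bigr => i _; rewrite scalerA.
Qed.
Fixpoint cfeq (t u : tm) (k : nat) : Prop :=
  match k with 0 => True | k'.+1 => cf k' t = cf k' u /\ cfeq t u k' end.
Lemma tm_eq ms t u : cfeq t u (size ms) -> ev ms t = ev ms u.
Proof.
move=> h; rewrite !ev_cf; apply: eq_bigr => [[k hk]] _ /=; congr (_ *: _).
elim: (size ms) h k hk => // m IH [h1 h2] k; rewrite ltnS leq_eqVlt.
by case/orP => [/eqP -> // | /IH]; apply.
Qed.
End LinComb.
Arguments ev {V}.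
Arguments tm_eq {V}.

Ltac lookup e ms :=
  lazymatch ms with
  | (e :: _) => constr:(0%N)
  | (_ :: ?r) => let k := lookup e r in constr:(k.+1)
  end.
Ltac reify ms e :=
  lazymatch e with
  | @GRing.zero _ => constr:(Zr)
  | ?x + ?y => let a := reify ms x in let b := reify ms y in constr:(Ad a b)
  | - ?x => let a := reify ms x in constr:(Ng a)
  | ?s *: ?x => let a := reify ms x in constr:(Sc s a)
  | _ => let k := lookup e ms in constr:(Lf k)
  end.
Ltac lin ms :=
  lazymatch goal with
  | |- ?L = ?R =>
    let t := reify ms L in let u := reify ms R in
    change (ev ms t = ev ms u); apply: tm_eq; rewrite /=;
    repeat split
  end.

Lemma test (V : lmodType QV) (a b : V) (s : QV) :
  s *: (a - b) + b = s *: a + (1 - s) *: b.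
Proof. lin [:: a; b]; ring. Qed.

Lemma sAl (A : algType QV) k (x y : A) : (k *: x) * y = k *: (x * y).
Proof. by rewrite scalerAl. Qed.
Lemma sAr (A : algType QV) k (x y : A) : x * (k *: y) = k *: (x * y).
Proof. by rewrite scalerAr. Qed.

Ltac nrm := rewrite ?(mulrDr, mulrDl, mulrN, mulNr, mulr0, mul0r, sAl, sAr, mulrA).

Section Main.
Variable A : algType QV.
Variable n : nat.
Variables K Ki Kb E Eb F Fb : nat -> A.
Hypothesis HR : Uq_relations n K Ki Kb E Eb F Fb.
Local Notation v := vq.
Local Notation X := (Eroot E F).

Let H1 : QQ1 n K Ki Kb. Proof. by case: HR. Qed.
Let H2 : QQ2 n K E Eb F Fb. Proof. by case: HR. Qed.
Let H4 : QQ4 n K Ki Kb E Eb F Fb. Proof. by case: HR. Qed.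
Let H5 : QQ5 n E Eb F Fb. Proof. by case: HR => _ _ _ _ []. Qed.

Lemma KKi c : (1 <= c <= n)%N -> K c * Ki c = 1.
Proof. by move=> h; case: (H1 _ _ h h). Qed.
Lemma KiK c : (1 <= c <= n)%N -> Ki c * K c = 1.
Proof. by move=> h; case: (H1 _ _ h h). Qed.
Lemma KK a b : (1 <= a <= n)%N -> (1 <= b <= n)%N -> K a * K b = K b * K a.
Proof. by move=> ha hb; case: (H1 _ _ ha hb). Qed.
Lemma KE c d : (1 <= c <= n)%N -> (1 <= d <= n.-1)%N ->
  K c * E d = vpow c d *: (E d * K c).
Proof. by move=> hc hd; case: (H2 _ _ hc hd). Qed.
Lemma KF c d : (1 <= c <= n)%N -> (1 <= d <= n.-1)%N ->
  K c * F d = vpowN c d *: (F d * K c).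
Proof. by move=> hc hd; case: (H2 _ _ hc hd). Qed.
Lemma EF a b : (1 <= a <= n.-1)%N -> (1 <= b <= n.-1)%N -> a != b ->
  E a * F b = F b * E a.
Proof.
move=> ha hb hab; case: (H4 _ _ ha hb); rewrite (negbTE hab) => h _ _ _.
by apply/eqP; rewrite -subr_eq0 h.
Qed.
Lemma EFs a : (1 <= a <= n.-1)%N ->
  E a * F a = F a * E a + (v - v^-1)^-1 *: (K a * Ki a.+1 - Ki a * K a.+1).
Proof.
move=> ha; case: (H4 _ _ ha ha); rewrite eqxx => h _ _ _.
by rewrite -h addrC subrK.
Qed.
Lemma EEfar a b : (1 <= a <= n.-1)%N -> (1 <= b <= n.-1)%N ->
  (a.+1 < b)%N || (b.+1 < a)%N -> E a * E b = E b * E a.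
Proof. by move=> ha hb h; case: H5 => _ [_ [/(_ a b ha hb h) [] ]]. Qed.
Lemma FFfar a b : (1 <= a <= n.-1)%N -> (1 <= b <= n.-1)%N ->
  (a.+1 < b)%N || (b.+1 < a)%N -> F a * F b = F b * F a.
Proof. by move=> ha hb h; case: H5 => _ [_ [/(_ a b ha hb h) [] ]]. Qed.



Definition hom (x : A) (w : nat -> int) :=
  forall c, (1 <= c <= n)%N -> K c * x = v ^ (w c) *: (x * K c).

Lemma vz_neq0 (z : int) : v ^ z != 0.
Proof. exact: expfz_neq0 v_neq0. Qed.

Lemma homKi x w c : hom x w -> (1 <= c <= n)%N ->
  Ki c * x = v ^ (- w c) *: (x * Ki c).
Proof.
move=> h hc.
have e : x * K c = (v ^ (w c))^-1 *: (K c * x).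
  by rewrite h // scalerA mulVf ?scale1r // vz_neq0.
rewrite -invr_expz -[Ki c * x]mulr1 -(KKi _ hc) mulrA -(mulrA (Ki c)) e.
by rewrite sAr sAl mulrA KiK // mul1r.
Qed.

Lemma homM x y w1 w2 : hom x w1 -> hom y w2 -> hom (x * y) (fun c => w1 c + w2 c).
Proof.
move=> hx hy c hc; rewrite mulrA hx // sAl -mulrA hy // sAr mulrA scalerA.
by rewrite expfzDr ?v_neq0.
Qed.
Lemma homD x y w : hom x w -> hom y w -> hom (x + y) w.
Proof. by move=> hx hy c hc; rewrite mulrDr mulrDl hx // hy // scalerDr. Qed.
Lemma homN x w : hom x w -> hom (- x) w.
Proof. by move=> hx c hc; rewrite mulrN mulNr hx // scalerN. Qed.
Lemma homZ x w s : hom x w -> hom (s *: x) w.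
Proof. by move=> hx c hc; rewrite sAr sAl hx // !scalerA mulrC. Qed.
Lemma hom_ext x w1 w2 : (forall c, w1 c = w2 c) -> hom x w1 -> hom x w2.
Proof. by move=> e hx c hc; rewrite -e hx. Qed.

Arguments hom_ext {x w1 w2}.
Arguments homM {x y w1 w2}.
Arguments homKi {x w c}.

Definition ind (c a : nat) : int := if c == a then 1 else 0.

Lemma homE d : (1 <= d <= n.-1)%N -> hom (E d) (fun c => ind c d - ind c d.+1).
Proof.
move=> hd c hc; rewrite KE // /vpow /ind.
case: eqP => [->|_]; first by rewrite (ltn_eqF (ltnSn d)) expr1z.
case: eqP => _; last by rewrite expr0z.
by rewrite exprN1.
Qed.
Lemma homF d : (1 <= d <= n.-1)%N -> hom (F d) (fun c => ind c d.+1 - ind c d).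
Proof.
move=> hd c hc; rewrite KF // /vpowN /ind.
case: eqP => [->|_]; first by rewrite (ltn_eqF (ltnSn d)) exprN1.
case: eqP => _; last by rewrite expr0z.
by rewrite expr1z.
Qed.


Lemma Xrec1 a : X a a.+1 = E a.
Proof. by rewrite /Eroot ltnSn subSnn. Qed.
Lemma Yrec1 a : X a.+1 a = F a.
Proof. by rewrite /Eroot ltnNge leqnSn ltnSn subSnn. Qed.
Lemma Xrec a b : (a < b)%N -> X a b.+1 = -(X a b * E b) + v^-1 *: (E b * X a b).
Proof.
move=> ab; have h2 : (a < b.+1)%N = true by lia.
rewrite /Eroot ab h2 subSn ?(ltnW ab) //=.
case e: (b - a)%N => [|d]; first by lia.
by rewrite /= (_ : ((a + d).+1 = b)%N) //; lia.
Qed.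
Lemma Yrec a b : (a < b)%N -> X b.+1 a = -(F b * X b a) + v *: (X b a * F b).
Proof.
move=> ab; have h1 : (b.+1 < a)%N = false by lia.
have h2 : (a < b.+1)%N = true by lia. have h3 : (b < a)%N = false by lia.
rewrite /Eroot h1 h2 h3 ab subSn ?(ltnW ab) //=.
case e: (b - a)%N => [|d]; first by lia.
by rewrite /= (_ : ((a + d).+1 = b)%N) //; lia.
Qed.

Arguments Xrec {a b}.
Arguments Yrec {a b}.

Lemma Xind a (P : nat -> Prop) : P a.+1 -> (forall b, (a < b)%N -> P b -> P b.+1) ->
  forall b, (a < b)%N -> P b.
Proof.
move=> h0 hS; elim=> // b IH; rewrite ltnS leq_eqVlt => /orP [/eqP <- //|ab].
exact: hS ab (IH ab).
Qed.

Lemma homX a b : (1 <= a)%N -> (a < b)%N -> (b <= n)%N ->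
  hom (X a b) (fun c => ind c a - ind c b).
Proof.
move=> ha; move: b; apply: (@Xind a (fun b => (b <= n)%N ->
  hom (X a b) (fun c => ind c a - ind c b))) => [bn|b ab IH bn].
  by rewrite Xrec1; apply: homE; lia.
rewrite Xrec //; have hE : hom (E b) (fun c => ind c b - ind c b.+1) by apply: homE; lia.
have hX := IH (ltnW bn).
apply: homD; [apply: homN; apply: hom_ext (homM hX hE) | apply: homZ; apply: hom_ext (homM hE hX)];
  by move=> c; ring.
Qed.
Lemma homY a b : (1 <= a)%N -> (a < b)%N -> (b <= n)%N ->
  hom (X b a) (fun c => ind c b - ind c a).
Proof.
move=> ha; move: b; apply: (@Xind a (fun b => (b <= n)%N ->
  hom (X b a) (fun c => ind c b - ind c a))) => [bn|b ab IH bn].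
  by rewrite Yrec1; apply: homF; lia.
rewrite Yrec //; have hE : hom (F b) (fun c => ind c b.+1 - ind c b) by apply: homF; lia.
have hX := IH (ltnW bn).
apply: homD; [apply: homN; apply: hom_ext (homM hE hX) | apply: homZ; apply: hom_ext (homM hX hE)];
  by move=> c; ring.
Qed.


Arguments homX {a b}.
Arguments homY {a b}.

Lemma KKix p q x w z : hom x w -> (1 <= p <= n)%N -> (1 <= q <= n)%N ->
  w p - w q = z -> K p * Ki q * x = v ^ z *: (x * K p * Ki q).
Proof.
move=> hx hp hq <-; rewrite -mulrA (homKi hx hq) sAr mulrA hx // sAl scalerA.
by rewrite -expfzDr ?v_neq0 // addrC.
Qed.
Lemma KiKx p q x w z : hom x w -> (1 <= p <= n)%N -> (1 <= q <= n)%N ->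
  w q - w p = z -> Ki p * K q * x = v ^ z *: (x * Ki p * K q).
Proof.
move=> hx hp hq <-; rewrite -mulrA (hx _ hq) sAr mulrA (homKi hx hp) sAl scalerA.
by rewrite -expfzDr ?v_neq0 // addrC.
Qed.

Arguments KKix {p q x w} z.
Arguments KiKx {p q x w} z.
Lemma homK a : (1 <= a <= n)%N -> hom (K a) (fun _ => 0).
Proof. by move=> ha c hc; rewrite expr0z scale1r KK. Qed.
Arguments homK {a}.
Lemma homKi' a : (1 <= a <= n)%N -> hom (Ki a) (fun _ => 0).
Proof.
move=> ha c hc; rewrite expr0z scale1r.
by rewrite (homKi (homK hc) ha) oppr0 expr0z scale1r.
Qed.
Arguments homKi' {a}.
Lemma KKic a b : (1 <= a <= n)%N -> (1 <= b <= n)%N -> K a * Ki b = Ki b * K a.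
Proof. by move=> ha hb; rewrite (homKi' hb) // expr0z scale1r. Qed.
Lemma KiKic a b : (1 <= a <= n)%N -> (1 <= b <= n)%N -> Ki a * Ki b = Ki b * Ki a.
Proof. by move=> ha hb; rewrite (homKi (homKi' hb) ha) oppr0 expr0z scale1r. Qed.

Definition cm (x y : A) := x * y - y * x.
Lemma cmMr x p q : cm x (p * q) = cm x p * q + p * cm x q.
Proof. by rewrite /cm mulrBl mulrBr !mulrA addrA subrK. Qed.
Lemma cmMl p q x : cm (p * q) x = p * cm q x + cm p x * q.
Proof. by rewrite /cm mulrBl mulrBr !mulrA addrA subrK. Qed.
Lemma cmDr x p q : cm x (p + q) = cm x p + cm x q.
Proof. by rewrite /cm mulrDl mulrDr opprD addrACA. Qed.
Lemma cmDl p q x : cm (p + q) x = cm p x + cm q x.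
Proof. by rewrite /cm mulrDl mulrDr opprD addrACA. Qed.
Lemma cmNr x p : cm x (- p) = - cm x p.
Proof. by rewrite /cm mulrN mulNr opprB opprK addrC. Qed.
Lemma cmNl p x : cm (- p) x = - cm p x.
Proof. by rewrite /cm mulrN mulNr opprB opprK addrC. Qed.
Lemma cmZr x s p : cm x (s *: p) = s *: cm x p.
Proof. by rewrite /cm sAr sAl scalerBr. Qed.
Lemma cmZl s p x : cm (s *: p) x = s *: cm p x.
Proof. by rewrite /cm sAr sAl scalerBr. Qed.
Lemma cm0 x y : cm x y = 0 -> x * y = y * x.
Proof. by move/eqP; rewrite subr_eq0 => /eqP. Qed.
Lemma cm0' x y : x * y = y * x -> cm x y = 0.
Proof. by rewrite /cm => ->; rewrite subrr. Qed.

Arguments cm0' {x y}.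
Ltac cmx := rewrite ?(cmMr, cmMl, cmDr, cmDl, cmNr, cmNl, cmZr, cmZl).

Lemma commM (x p q : A) : x * p = p * x -> x * q = q * x -> x * (p * q) = (p * q) * x.
Proof. by move=> hp hq; rewrite mulrA hp -mulrA hq mulrA. Qed.
Lemma comm_rec (x p q : A) s : x * p = p * x -> x * q = q * x ->
  x * (-(p * q) + s *: (q * p)) = (-(p * q) + s *: (q * p)) * x.
Proof.
move=> hp hq; rewrite mulrDr mulrN sAr mulrDl mulNr sAl.
by rewrite (commM _ _ _ hp hq) (commM _ _ _ hq hp).
Qed.

Lemma FX a b c : (1 <= a)%N -> (a < b)%N -> (b <= n)%N -> (1 <= c <= n.-1)%N ->
  (c < a)%N || (b <= c)%N -> F c * X a b = X a b * F c.
Proof.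
move=> ha; move: b; apply: (@Xind a (fun b => (b <= n)%N -> (1 <= c <= n.-1)%N ->
  (c < a)%N || (b <= c)%N -> F c * X a b = X a b * F c)) => [bn hc hca|b ab IH bn hc hcb].
  by rewrite Xrec1 (EF a c) //; lia.
rewrite Xrec //; apply: comm_rec; first by apply: IH => //; lia.
by rewrite (EF b c) //; lia.
Qed.
Lemma EY a b c : (1 <= a)%N -> (a < b)%N -> (b <= n)%N -> (1 <= c <= n.-1)%N ->
  (c < a)%N || (b <= c)%N -> E c * X b a = X b a * E c.
Proof.
move=> ha; move: b; apply: (@Xind a (fun b => (b <= n)%N -> (1 <= c <= n.-1)%N ->
  (c < a)%N || (b <= c)%N -> E c * X b a = X b a * E c)) => [bn hc hca|b ab IH bn hc hcb].
  by rewrite Yrec1 (EF c a) //; lia.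
rewrite Yrec //; apply: comm_rec; last by apply: IH => //; lia.
by rewrite (EF c b) //; lia.
Qed.
Lemma FY a b c : (1 <= a)%N -> (a < b)%N -> (b <= n)%N -> (1 <= c <= n.-1)%N ->
  (b < c)%N -> F c * X b a = X b a * F c.
Proof.
move=> ha; move: b; apply: (@Xind a (fun b => (b <= n)%N -> (1 <= c <= n.-1)%N ->
  (b < c)%N -> F c * X b a = X b a * F c)) => [bn hc hca|b ab IH bn hc hcb].
  by rewrite Yrec1 (FFfar c a) //; lia.
rewrite Yrec //; apply: comm_rec; last by apply: IH => //; lia.
by rewrite (FFfar c b) //; lia.
Qed.

Ltac wt := rewrite /ind; repeat case: eqP => ?; lia.

Lemma vN1 : v ^ (-1) = v^-1. Proof. exact: exprN1. Qed.
Lemma v1 : v ^ 1 = v. Proof. exact: expr1z. Qed.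

Let vn0 := v_neq0.
Let dn0 := vvN_neq0.

Lemma FXlast a b : (1 <= a)%N -> (a < b)%N -> (b < n)%N ->
  cm (F b) (X a b.+1) = v^-1 *: (X a b * K b * Ki b.+1).
Proof.
move=> ha ab bn; rewrite Xrec //; cmx.
have h1 : F b * X a b = X a b * F b by apply: FX => //; lia.
rewrite (cm0' h1).
have -> : cm (F b) (E b) = - ((v - v^-1)^-1 *: (K b * Ki b.+1 - Ki b * K b.+1)).
  by rewrite /cm EFs; [rewrite opprD addrA subrr add0r | lia].
have hX := homX ha ab (ltnW bn).
nrm; rewrite (KKix (-1) hX) ?(KiKx 1 hX); try (wt || lia).
rewrite vN1 v1; nrm.
set m1 := X a b * K b * Ki b.+1; set m2 := X a b * Ki b * K b.+1.
by lin [:: m1; m2]; scal.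
Qed.


Lemma KKixl p q y x w z : hom x w -> (1 <= p <= n)%N -> (1 <= q <= n)%N ->
  w p - w q = z -> y * K p * Ki q * x = v ^ z *: (y * x * K p * Ki q).
Proof. by move=> hx hp hq hz; rewrite -!mulrA [K p * (Ki q * x)]mulrA (KKix z hx) // sAr !mulrA. Qed.
Lemma KiKxl p q y x w z : hom x w -> (1 <= p <= n)%N -> (1 <= q <= n)%N ->
  w q - w p = z -> y * Ki p * K q * x = v ^ z *: (y * x * Ki p * K q).
Proof. by move=> hx hp hq hz; rewrite -!mulrA [Ki p * (K q * x)]mulrA (KiKx z hx) // sAr !mulrA. Qed.
Arguments KKixl {p q} y {x w} z.
Arguments KiKxl {p q} y {x w} z.

Lemma cmA x y : cm x y = - cm y x.
Proof. by rewrite /cm opprB. Qed.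

Lemma v0 : v ^ 0 = 1. Proof. exact: expr0z. Qed.

Lemma EYlast a b : (1 <= a)%N -> (a < b)%N -> (b < n)%N ->
  cm (E b) (X b.+1 a) = - (X b a * Ki b * K b.+1).
Proof.
move=> ha ab bn; rewrite Yrec //; cmx.
have h1 : E b * X b a = X b a * E b by apply: EY => //; lia.
rewrite (cm0' h1).
have -> : cm (E b) (F b) = (v - v^-1)^-1 *: (K b * Ki b.+1 - Ki b * K b.+1).
  by rewrite /cm EFs; [rewrite addrC addKr | lia].
have hX := homY ha ab (ltnW bn).
nrm; rewrite (KKix 1 hX) ?(KiKx (-1) hX); try (wt || lia).
rewrite vN1 v1; nrm.
set m1 := X b a * K b * Ki b.+1; set m2 := X b a * Ki b * K b.+1.
by lin [:: m1; m2]; scal.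
Qed.

Arguments EYlast {a b}.
Arguments FXlast {a b}.

Lemma EYmid a b c : (1 <= a)%N -> (a < c)%N -> (c.+1 < b)%N -> (b <= n)%N ->
  E c * X b a = X b a * E c.
Proof.
move=> ha ac; move: b; apply: (@Xind c.+1 (fun b => (b <= n)%N ->
  E c * X b a = X b a * E c)) => [bn|b cb IH bn].
  apply: cm0; rewrite Yrec; last by lia.
  cmx; rewrite (EYlast ha ac); last by lia.
  have h1 : E c * F c.+1 = F c.+1 * E c by rewrite (EF c c.+1) //; lia.
  rewrite (cm0' h1).
  have hF : hom (F c.+1) (fun x => ind x c.+2 - ind x c.+1) by apply: homF; lia.
  nrm; rewrite (KiKxl (X c a) (-1) hF); try (wt || lia).
  have h2 : F c.+1 * X c a = X c a * F c.+1 by apply: FY => //; lia.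
  rewrite h2 vN1; nrm.
  set m1 := X c a * F c.+1 * Ki c * K c.+1.
  by lin [:: m1]; scal.
rewrite Yrec; last by lia.
apply: comm_rec; last by apply: IH; lia.
by rewrite (EF c b) //; lia.
Qed.

Lemma case1a i j k l : (1 <= i)%N -> (i < j)%N -> (j <= k)%N -> (k < l)%N -> (l <= n)%N ->
  X j i * X k l = X k l * X j i.
Proof.
move=> hi ij jk kl ln; move: j ij jk; apply: (@Xind i (fun j => (j <= k)%N ->
  X j i * X k l = X k l * X j i)) => [jk|j ij IH jk].
  by rewrite Yrec1 (FX k l i) //; lia.
rewrite Yrec //; symmetry; apply: comm_rec; last by rewrite IH //; lia.
by rewrite (FX k l j) //; lia.
Qed.

Lemma case1b i j k l : (1 <= i)%N -> (i < k)%N -> (k < l)%N -> (l < j)%N -> (j <= n)%N ->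
  X j i * X k l = X k l * X j i.
Proof.
move=> hi ik kl lj jn; move: l kl lj; apply: (@Xind k (fun l => (l < j)%N ->
  X j i * X k l = X k l * X j i)) => [lj|l kl IH lj].
  by rewrite Xrec1 (EYmid i j k) //; lia.
rewrite Xrec //; apply: comm_rec; first by rewrite IH //; lia.
by rewrite (EYmid i j l) //; lia.
Qed.


Lemma P2b_of_P5 i j : (1 <= i)%N -> (i < j)%N -> (j < n)%N ->
  cm (X j i) (X i j) = (v - v^-1)^-1 *: (K j * Ki i - K i * Ki j) ->
  cm (X j i) (X i j.+1) = - (E j * K j * Ki i).
Proof.
move=> hi ij jn h5; rewrite (Xrec ij); cmx.
have h1 : X j i * E j = E j * X j i by rewrite (EY i j j) //; lia.
rewrite h5 (cm0' h1).
have hE : hom (E j) (fun c => ind c j - ind c j.+1) by apply: homE; lia.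
nrm; rewrite (KKix (p:=j) (q:=i) 1 hE) ?(KKix (p:=i) (q:=j) (-1) hE); try (wt || lia).
rewrite vN1 v1; nrm.
set m1 := E j * K j * Ki i; set m2 := E j * K i * Ki j.
by lin [:: m1; m2]; scal.
Qed.

Arguments P2b_of_P5 {i j}.
Lemma P5 i j : (1 <= i)%N -> (i < j)%N -> (j <= n)%N ->
  cm (X j i) (X i j) = (v - v^-1)^-1 *: (K j * Ki i - K i * Ki j).
Proof.
move=> hi; move: j; apply: (@Xind i (fun j => (j <= n)%N ->
  cm (X j i) (X i j) = (v - v^-1)^-1 *: (K j * Ki i - K i * Ki j))) => [jn|j ij IH jn].
  rewrite Yrec1 Xrec1 /cm EFs; last by lia.
  rewrite opprD addrA subrr add0r (KKic i.+1 i); try lia.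
  set m1 := K i * Ki i.+1; set m2 := Ki i * K i.+1.
  by lin [:: m1; m2]; scal.
have IH' := IH (ltnW jn).
have h2 := P2b_of_P5 hi ij jn IH'.
rewrite {1}(Yrec ij); cmx.
rewrite h2 (FXlast hi ij jn).
have hF : hom (F j) (fun c => ind c j.+1 - ind c j) by apply: homF; lia.
have hY := homY hi ij (ltnW jn).
nrm; rewrite (KKixl (p:=j) (q:=i) (E j) (-1) hF); try (wt || lia).
rewrite (KKixl (p:=j) (q:=j.+1) (X i j) 1 hY); try (wt || lia).
rewrite vN1 v1; nrm.
have e5 : X j i * X i j = X i j * X j i + (v - v^-1)^-1 *: (K j * Ki i - K i * Ki j).
  by rewrite -IH' /cm addrC subrK.
rewrite EFs ?e5; last by lia.
nrm.
have e1 : Ki j * K j.+1 * K j * Ki i = K j.+1 * Ki i.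
  by rewrite -(mulrA (Ki j)) (KK j.+1 j) ?mulrA ?KiK ?mul1r //; lia.
have e2 : K i * Ki j * K j * Ki j.+1 = K i * Ki j.+1.
  by rewrite -(mulrA (K i)) KiK ?mulr1 //; lia.
have e3 : K j * Ki i * K j * Ki j.+1 = K j * Ki j.+1 * K j * Ki i.
  rewrite -(mulrA (K j) (Ki i)) -(KKic j i); try lia.
  rewrite -(mulrA (K j) (Ki j.+1)) -(KKic j j.+1); try lia.
  by rewrite !mulrA -!(mulrA (K j * K j)) KiKic //; lia.
rewrite e1 e2 e3.
set m1 := F j * E j * K j * Ki i; set m2 := X i j * X j i * K j * Ki j.+1.
set m3 := K j * Ki j.+1 * K j * Ki i; set m4 := K j.+1 * Ki i; set m5 := K i * Ki j.+1.
by lin [:: m1; m2; m3; m4; m5]; scal.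
Qed.


Lemma P2 i j l : (1 <= i)%N -> (i < j)%N -> (j < l)%N -> (l <= n)%N ->
  cm (X j i) (X i l) = - (X j l * K j * Ki i).
Proof.
move=> hi ij; move: l; apply: (@Xind j (fun l => (l <= n)%N ->
  cm (X j i) (X i l) = - (X j l * K j * Ki i))) => [ln|l jl IH ln].
  by rewrite Xrec1 (P2b_of_P5 hi ij ln) // P5 //; lia.
have il : (i < l)%N by lia.
rewrite (Xrec (a:=i) (b:=l) il); cmx.
have h1 : X j i * E l = E l * X j i by rewrite (EY i j l) //; lia.
rewrite (cm0' h1) IH; last by lia.
have hE : hom (E l) (fun c => ind c l - ind c l.+1) by apply: homE; lia.
nrm; rewrite (KKixl (p:=j) (q:=i) (X j l) 0 hE); try (wt || lia).
rewrite v0 scale1r (Xrec (a:=j) (b:=l) jl); nrm.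
set m1 := X j l * E l * K j * Ki i; set m2 := E l * X j l * K j * Ki i.
by lin [:: m1; m2]; scal.
Qed.

Lemma P3 i k j : (1 <= i)%N -> (i < k)%N -> (k < j)%N -> (j <= n)%N ->
  cm (X j i) (X k j) = X k i * K j * Ki k.
Proof.
move=> hi ik; move: j; apply: (@Xind k (fun j => (j <= n)%N ->
  cm (X j i) (X k j) = X k i * K j * Ki k)) => [jn|j kj IH jn].
  rewrite Xrec1 cmA (EYlast hi ik jn) opprK -!mulrA (KKic k.+1 k) //; lia.
have ij : (i < j)%N by lia.
rewrite (Xrec (a:=k) (b:=j) kj); cmx.
have h1 : X j.+1 i * X k j = X k j * X j.+1 i by apply: case1b => //; lia.
rewrite (cm0' h1) (cmA (X j.+1 i) (E j)) (EYlast hi ij jn) opprK.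
have hX := homX (ltnW (leq_ltn_trans hi ik)) kj (ltnW jn).
nrm; rewrite (KiKxl (p:=j) (q:=j.+1) (X j i) 1 hX); try (wt || lia).
have e5 : X j i * X k j = X k j * X j i + X k i * K j * Ki k.
  by rewrite -IH ?(ltnW jn) // /cm addrC subrK.
rewrite v1 e5; nrm.
have e : X k i * K j * Ki k * Ki j * K j.+1 = X k i * K j.+1 * Ki k.
  rewrite -!mulrA; congr (_ * _).
  rewrite [Ki k * (Ki j * K j.+1)]mulrA (KiKic k j); try lia.
  rewrite -mulrA mulrA KKi ?mul1r -?(KKic j.+1 k) //; lia.
rewrite e.
set m1 := X k j * X j i * Ki j * K j.+1; set m2 := X k i * K j.+1 * Ki k.
by lin [:: m1; m2]; scal.
Qed.

Lemma P4 i k j l : (1 <= i)%N -> (i < k)%N -> (k < j)%N -> (j < l)%N -> (l <= n)%N ->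
  cm (X j i) (X k l) = - ((v - v^-1) *: (X k i * X j l * K j * Ki k)).
Proof.
move=> hi ik kj; move: l; apply: (@Xind j (fun l => (l <= n)%N ->
  cm (X j i) (X k l) = - ((v - v^-1) *: (X k i * X j l * K j * Ki k)))) => [ln|l jl IH ln].
  rewrite (Xrec (a:=k) (b:=j) kj) Xrec1; cmx.
  have h1 : X j i * E j = E j * X j i by rewrite (EY i j j) //; lia.
  rewrite (cm0' h1) P3 //; try lia.
  have hE : hom (E j) (fun c => ind c j - ind c j.+1) by apply: homE; lia.
  nrm; rewrite (KKixl (p:=j) (q:=k) (X k i) 1 hE); try (wt || lia).
  rewrite (EY i k j) //; try lia.
  rewrite v1; nrm.
  set m1 := X k i * E j * K j * Ki k.
  by lin [:: m1]; scal.
have kl : (k < l)%N by lia.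
rewrite (Xrec (a:=k) (b:=l) kl); cmx.
have h1 : X j i * E l = E l * X j i by rewrite (EY i j l) //; lia.
rewrite (cm0' h1) IH; last by lia.
have hE : hom (E l) (fun c => ind c l - ind c l.+1) by apply: homE; lia.
nrm; rewrite (KKixl (p:=j) (q:=k) (X k i * X j l) 0 hE); try (wt || lia).
rewrite (EY i k l) //; try lia.
rewrite v0 scale1r (Xrec (a:=j) (b:=l) jl); nrm.
set m1 := X k i * X j l * E l * K j * Ki k; set m2 := X k i * E l * X j l * K j * Ki k.
by lin [:: m1; m2]; scal.
Qed.

End Main.

Lemma cmE (A : algType QV) (x y c : A) : x * y - y * x = c -> x * y = y * x + c.
Proof. by move=> <-; rewrite addrC subrK. Qed.

Theorem lemma2p9 (n : nat) (A : algType QV) (K Ki Kb E Eb F Fb : nat -> A) :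
  Uq_relations n K Ki Kb E Eb F Fb ->
  forall i j k l : nat,
    (1 <= i)%N -> (i < j)%N -> (j <= n)%N ->
    (1 <= k)%N -> (k < l)%N -> (l <= n)%N -> (i <= k)%N ->
  let Er := Eroot E F in
  [/\ ((i < j <= k)%N || [&& i < k, k < l & l < j]%N) ->
        Er j i * Er k l = Er k l * Er j i,
      [&& i == k, k < j & j < l]%N ->
        Er j i * Er k l = Er k l * Er j i - Er j l * K j * Ki i,
      [&& i < k, k < j & j == l]%N ->
        Er j i * Er k l = Er k l * Er j i + Er k i * K j * Ki k,
      [&& i < k, k < j & j < l]%N ->
        Er j i * Er k l = Er k l * Er j i - (vq - vq^-1) *: (Er k i * Er j l * K j * Ki k) &
      ((i == k) && (j == l))%N ->
        Er j i * Er k l = Er k l * Er j i + (vq - vq^-1)^-1 *: (K j * Ki i - K i * Ki j)].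
Proof.
move=> HR i j k l hi ij jn hk kl ln ik Er; rewrite /Er; split.
- case/orP => [/andP [_ jk] | /and3P [ik' kl' lj]].
    exact: (@case1a _ _ _ _ _ _ _ _ _ HR _ _ _ _ hi ij jk kl ln).
  exact: (@case1b _ _ _ _ _ _ _ _ _ HR _ _ _ _ hi ik' kl' lj jn).
- case/and3P => /eqP <- kj jl; apply: cmE.
  exact: (@P2 _ _ _ _ _ _ _ _ _ HR _ _ _ hi ij jl ln).
- case/and3P => ik' kj /eqP <-; apply: cmE.
  exact: (@P3 _ _ _ _ _ _ _ _ _ HR _ _ _ hi ik' kj jn).
- case/and3P => ik' kj jl; apply: cmE.
  exact: (@P4 _ _ _ _ _ _ _ _ _ HR _ _ _ _ hi ik' kj jl ln).
- case/andP => /eqP <- /eqP <-; apply: cmE.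
  exact: (@P5 _ _ _ _ _ _ _ _ _ HR _ _ hi ij jn).
Qed.
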